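(* For every DBI normal formula $\varphi$, the pointed action model $(\mathcal{U}_\varphi,0)$ (more precisely, its pointed frame $(\langle E^\varphi,Q^\varphi\rangle,0)$) is privatized with respect to $\varphi$.
   Context: Agents $\mathcal{A}=\{1,\dots,n\}$, $n>1$; language $\mathcal{L}$: $\varphi ::= p \mid \neg\varphi \mid (\varphi\wedge\varphi)\mid B_i\varphi$, $\top$ the usual tautology. An action model $\mathcal{U}=\langle E,Q,\mathsf{pre}\rangle$ has a nonempty set $E$ of events, relations $Q_i\subseteq E\times E$, $\mathsf{pre}:E\to\mathcal{L}$. Target agents: $\mathsf{ta}(p)=\varnothing$, $\mathsf{ta}(\neg\phi)=\mathsf{ta}(\phi)$, $\mathsf{ta}(\phi\wedge\psi)=\mathsf{ta}(\phi)\cup\mathsf{ta}(\psi)$, $\mathsf{ta}(B_i\phi)=\{i\}$. DBI formulas: $\varphi ::= B_i\xi \mid B_i(\xi\wedge\varphi)\mid(\varphi\wedge\varphi)\mid B_i\varphi$, $\xi$ purely propositional. DBI normal: $B_i\xi$ always; $B_i\varphi$, $B_i(\xi\wedge\varphi)$ iff $\varphi$ DBI normal and $i\notin\mathsf{ta}(\varphi)$; $\varphi\wedge\psi$ iff both DBI normal and $\mathsf{ta}(\varphi)\cap\mathsf{ta}(\psi)=\varnothing$. Action model $\mathcal{U}_\varphi=\langle E^\varphi,Q^\varphi,\mathsf{pre}^\varphi\rangle$ for DBI normal $\varphi$, recursively; always $E^\varphi=\{0,-1\}\sqcup D^\varphi$, $\varnothing\ne D^\varphi\subseteq\{1,2,\dots\}$,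 $\mathsf{pre}^\varphi(0)=\mathsf{pre}^\varphi(-1)=\top$; $\underline{Q}_j:=Q_j\cap((E\setminus\{0\})\times(E\setminus\{0\}))$. (1) $\varphi=B_i\xi$: $D=\{m\}$, $\mathsf{pre}(m)=\xi$, $Q_j=\{(0,-1),(m,-1),(-1,-1)\}$ ($j\ne i$), $Q_i=\{(0,m),(m,m),(-1,-1)\}$. (2) $\varphi=B_i\psi$: fresh $m\ge1$, $m\notin D^\psi$; $D^\varphi=D^\psi\sqcup\{m\}$; $\mathsf{pre}^\varphi$ extends $\mathsf{pre}^\psi$ with $\mathsf{pre}^\varphi(m)=\top$; $Q^\varphi_j=\underline{Q}^\psi_j\cup\{(0,-1)\}\cup\{(m,k)\mid(0,k)\in Q^\psi_j\}$ ($j\ne i$); $Q^\varphi_i=\underline{Q}^\psi_i\cup\{(0,m),(m,m)\}$. (3) $\varphi=B_i(\xi\wedge\psi)$: as (2) but $\mathsf{pre}^\varphi(m)=\xi$. (4) $\varphi=\psi\wedge\theta$: with $D^\psi\cap D^\theta=\varnothing$, $D^\varphi=D^\psi\sqcup D^\theta$, $\mathsf{pre}^\varphi=\mathsf{pre}^\psi\cup\mathsf{pre}^\theta$, $Q^\varphi_j=\underline{Q}^\psi_j\cup\underline{Q}^\theta_j\cup\{(0,k)\mid(0,k)\in Q^\psi_j\cup Q^\theta_j, k\in D^\psi\sqcup D^\theta\}\cup\{(0,-1)\mid\text{no such }k\text{ exists}\}$. Modal syntactic tree $\mathcal{T}_\varphi$ of a DBI formula (an out-tree with unlabeled root, other nodes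 labeled by agents/modalities): $\mathcal{T}_{B_i\xi}$ is a root with one child labeled $B_i$; $\mathcal{T}_{B_i\psi}=\mathcal{T}_{B_i(\xi\wedge\psi)}$ is obtained by labeling the root of $\mathcal{T}_\psi$ with $B_i$ and making it the only child of a new root; $\mathcal{T}_{\psi\wedge\theta}$ is the disjoint union of $\mathcal{T}_\psi$ and $\mathcal{T}_\theta$ with their roots identified. $RootP(\varphi)$ is the set of paths in $\mathcal{T}_\varphi$ starting at the root (of any length $l\ge0$); the agent sequence $\mathsf{agSeq}(\sigma)=(i_1,\dots,i_l)$ of such a path lists the agents labeling its non-root nodes in order (empty for the empty path). For a frame $\mathcal{F}=\langle W,R\rangle$, $w\in W$ and an agent sequence $(i_1,\dots,i_l)$, the cluster is $C^{i_1,\dots,i_l}_{\mathcal{F},w}=\{u\in W\mid \exists u_2,\dots,u_l\in W:\ wR_{i_1}u_2R_{i_2}\cdots u_lR_{i_l}u\}$, with $C^\varepsilon_{\mathcal{F},w}=\{w\}$. $\mathcal{A}^l_{\mathrm{nsr}}$ is the set of agent sequences of length $l$ with no two successive equal agents. $(\mathcal{F},w)$ is privatized w.r.t. $\varphi$ iff for every $\sigma\in RootP(\varphi)$: $C^{\mathsf{agSeq}(\sigma)}_{\mathcal{F},w}\neq\varnothing$ and for every $s\in\bigcup_{l\ge0}\mathcal{A}^l_{\mathrm{nsr}}\setminus\{\mathsf{agSeq}(\sigma)\}$, $C^{\mathsf{agSeq}(\sigma)}_{\mathcal{F},w}\cap C^{s}_{\mathcal{F},w}=\varnothing$. *)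

(* Defs.v *)
From Stdlib Require Import ZArith List Arith Bool.
Import ListNotations.
Open Scope Z_scope.

Inductive form : Type :=
| Var : nat -> form
| Neg : form -> form
| And : form -> form -> form
| B : nat -> form -> form.

Definition top : form := Neg (And (Var 0) (Neg (Var 0))).

Fixpoint isprop (f : form) : bool :=
  match f with
  | Var _ => true
  | Neg g => isprop g
  | And g h => isprop g && isprop h
  | B _ _ => false
  end.

Fixpoint agents_in (n : nat) (f : form) : Prop :=
  match f with
  | Var _ => True
  | Neg g => agents_in n g
  | And g h => agents_in n g /\ agents_in n h
  | B i g => (1 <= i <= n)%nat /\ agents_in n g
  end.

Fixpoint ta (f : form) (j : nat) : Prop :=
  match f with
  | Var _ => False
  | Neg g => ta g j
  | And g h => ta g j \/ ta h j
  | B i _ => j = i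
  end.

Inductive DBI : form -> Prop :=
| DBI_Bxi : forall i xi, isprop xi = true -> DBI (B i xi)
| DBI_Bxiphi : forall i xi phi, isprop xi = true -> DBI phi -> DBI (B i (And xi phi))
| DBI_and : forall phi psi, DBI phi -> DBI psi -> DBI (And phi psi)
| DBI_B : forall i phi, DBI phi -> DBI (B i phi).

Inductive DBInormal : form -> Prop :=
| N_Bxi : forall i xi, isprop xi = true -> DBInormal (B i xi)
| N_B : forall i phi, DBInormal phi -> ~ ta phi i -> DBInormal (B i phi)
| N_Bxiphi : forall i xi phi, isprop xi = true -> DBInormal phi -> ~ ta phi i ->
    DBInormal (B i (And xi phi))
| N_and : forall phi psi, DBInormal phi -> DBInormal psi ->
    (forall j, ta phi j -> ta psi j -> False) -> DBInormal (And phi psi).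

(** Action models over events in Z: the event set is E = {0,-1} ⊔ D,
    relations Q : agent -> Z -> Z -> Prop, preconditions pre : Z -> form
    (values of pre outside E are irrelevant). *)
Definition Eset (D : Z -> Prop) (e : Z) : Prop := e = 0 \/ e = -1 \/ D e.

Definition Qunder (D : Z -> Prop) (Q : nat -> Z -> Z -> Prop) (j : nat) (a b : Z) : Prop :=
  Q j a b /\ Eset D a /\ a <> 0 /\ Eset D b /\ b <> 0.

(** [UM phi D Q pre]: (E, Q, pre) with E = Eset D is an action model U_phi
    obtained by the recursive construction (1)-(4), for some admissible choice
    of the fresh events. *)
Inductive UM : form -> (Z -> Prop) -> (nat -> Z -> Z -> Prop) -> (Z -> form) -> Prop :=
| UM_Bxi : forall i xi m,
    isprop xi = true -> 1 <= m ->
    UM (B i xi) (fun e => e = m)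
       (fun j a b =>
          if Nat.eqb j i
          then (a = 0 /\ b = m) \/ (a = m /\ b = m) \/ (a = -1 /\ b = -1)
          else (a = 0 /\ b = -1) \/ (a = m /\ b = -1) \/ (a = -1 /\ b = -1))
       (fun e => if Z.eqb e m then xi else top)
| UM_B : forall i psi D Q pre m,
    UM psi D Q pre -> isprop psi = false ->
    1 <= m -> ~ D m ->
    UM (B i psi) (fun e => D e \/ e = m)
       (fun j a b =>
          if Nat.eqb j i
          then Qunder D Q j a b \/ (a = 0 /\ b = m) \/ (a = m /\ b = m)
          else Qunder D Q j a b \/ (a = 0 /\ b = -1) \/ (a = m /\ Q j 0 b))
       (fun e => if Z.eqb e m then top else pre e)
| UM_Bxiphi : forall i xi psi D Q pre m,
    isprop xi = true -> UM psi D Q pre -> isprop psi = false ->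
    1 <= m -> ~ D m ->
    UM (B i (And xi psi)) (fun e => D e \/ e = m)
       (fun j a b =>
          if Nat.eqb j i
          then Qunder D Q j a b \/ (a = 0 /\ b = m) \/ (a = m /\ b = m)
          else Qunder D Q j a b \/ (a = 0 /\ b = -1) \/ (a = m /\ Q j 0 b))
       (fun e => if Z.eqb e m then xi else pre e)
| UM_and : forall psi theta D1 Q1 pre1 D2 Q2 pre2 (pre : Z -> form),
    UM psi D1 Q1 pre1 -> UM theta D2 Q2 pre2 ->
    (forall e, D1 e -> D2 e -> False) ->
    pre 0 = top -> pre (-1) = top ->
    (forall e, D1 e -> pre e = pre1 e) ->
    (forall e, D2 e -> pre e = pre2 e) ->
    UM (And psi theta) (fun e => D1 e \/ D2 e)
       (fun j a b =>
          Qunder D1 Q1 j a b \/ Qunder D2 Q2 j a b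
          \/ (a = 0 /\ (Q1 j 0 b \/ Q2 j 0 b) /\ (D1 b \/ D2 b))
          \/ (a = 0 /\ b = -1 /\
              ~ (exists k, (Q1 j 0 k \/ Q2 j 0 k) /\ (D1 k \/ D2 k))))
       pre.

(** Modal syntactic trees: a node has a list of labeled children
    (label = agent of the child node, subtree rooted at the child). *)
Inductive tree : Type := Node : list (nat * tree) -> tree.

Definition children (t : tree) : list (nat * tree) := let (c) := t in c.

(** T_phi for DBI formulas (other shapes are irrelevant). *)
Fixpoint mtree (f : form) : tree :=
  match f with
  | B i g =>
      if isprop g then Node [(i, Node [])]
      else match g with
           | And a b => if isprop a then Node [(i, mtree b)] else Node [(i, mtree g)]
           | _ => Node [(i, mtree g)]
           end
  | And a b => Node (children (mtree a) ++ children (mtree b))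
  | _ => Node []
  end.

(** Paths from the root, encoded by the successive child positions. *)
Inductive RootP : tree -> list nat -> Prop :=
| RootP_nil : forall t, RootP t []
| RootP_cons : forall ch k i t' p,
    nth_error ch k = Some (i, t') -> RootP t' p -> RootP (Node ch) (k :: p).

Fixpoint agSeq (t : tree) (p : list nat) : list nat :=
  match p with
  | [] => []
  | k :: p' =>
      match nth_error (children t) k with
      | Some (i, t') => i :: agSeq t' p'
      | None => []
      end
  end.

Inductive reach (W : Z -> Prop) (R : nat -> Z -> Z -> Prop) : Z -> list nat -> Z -> Prop :=
| reach_nil : forall w, reach W R w [] w
| reach_cons : forall w v i s u, R i w v -> W v -> reach W R v s u -> reach W R w (i :: s) u.

Definition cluster (W : Z -> Prop) (R : nat -> Z -> Z -> Prop) (w : Z) (s : list nat) (u : Z) : Prop :=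
  W u /\ reach W R w s u.

Fixpoint nsr (n : nat) (s : list nat) : Prop :=
  match s with
  | [] => True
  | i :: s' => (1 <= i <= n)%nat /\
      match s' with [] => True | j :: _ => i <> j end /\ nsr n s'
  end.

Definition privatized (n : nat) (W : Z -> Prop) (R : nat -> Z -> Z -> Prop) (w : Z) (phi : form) : Prop :=
  forall sigma, RootP (mtree phi) sigma ->
    (exists u, cluster W R w (agSeq (mtree phi) sigma) u) /\
    (forall s, nsr n s -> s <> agSeq (mtree phi) sigma ->
       forall u, cluster W R w (agSeq (mtree phi) sigma) u -> cluster W R w s u -> False).

(* Main.v *)
Require Import Defs.
From Stdlib Require Import ZArith List Lia Arith.
Import ListNotations.
Open Scope Z_scope.

Fixpoint nsr' (s : list nat) : Prop :=
  match s with
  | [] => True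
  | i :: s' => match s' with [] => True | j :: _ => i <> j end /\ nsr' s'
  end.

Lemma nsr_nsr' n s : nsr n s -> nsr' s.
Proof. induction s as [|i s IH]; simpl; auto. intros [_ [H1 H2]]; split; auto. Qed.

Lemma reach_nil_inv W R w u : reach W R w [] u -> u = w.
Proof. intros H; inversion H; auto. Qed.

Lemma reach_cons_inv W R w i s u : reach W R w (i::s) u ->
  exists v, R i w v /\ W v /\ reach W R v s u.
Proof. intros H; inversion H; subst; eauto. Qed.

Lemma reach_sink W R s u : (forall j b, R j (-1) b -> b = -1) -> reach W R (-1) s u -> u = -1.
Proof.
  intros HR; revert u; induction s as [|i s IH]; intros u H.
  - apply reach_nil_inv in H; auto.
  - apply reach_cons_inv in H as [v [H1 [_ H3]]]. apply HR in H1; subst. eauto.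
Qed.

Lemma reach_nonzero W R w s u : (forall j a b, R j a b -> b <> 0) -> s <> [] ->
  reach W R w s u -> u <> 0.
Proof.
  intros HR; revert w; induction s as [|i s IH]; intros w Hs H; [congruence|].
  apply reach_cons_inv in H as [v [H1 [_ H3]]].
  destruct s as [|k s].
  - apply reach_nil_inv in H3; subst; eauto.
  - eapply IH; [congruence|eauto].
Qed.

Lemma reach_sim (W1 W2 : Z -> Prop) Q1 Q2 (S : Z -> Prop) :
  (forall x, S x -> W2 x) ->
  (forall j a b, S a -> Q1 j a b -> W1 b -> Q2 j a b /\ S b) ->
  forall s v u, S v -> reach W1 Q1 v s u -> reach W2 Q2 v s u /\ S u.
Proof.
  intros HW HQ s; induction s as [|i s IH]; intros v u Hv H.
  - apply reach_nil_inv in H; subst; split; [constructor|auto].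
  - apply reach_cons_inv in H as [x [H1 [H2 H3]]].
    destruct (HQ _ _ _ Hv H1 H2) as [H4 H5].
    destruct (IH _ _ H5 H3) as [H6 H7].
    split; auto. econstructor; eauto.
Qed.

Lemma reach_closed W R (S : Z -> Prop) : (forall j a b, S a -> R j a b -> S b) ->
  forall s v u, S v -> reach W R v s u -> S u.
Proof. intros HS s; induction s as [|i s IH]; intros v u Hv H.
  - apply reach_nil_inv in H; subst; auto.
  - apply reach_cons_inv in H as [x [H1 [_ H2]]]. eapply IH; [|exact H2]. eapply HS; eauto.
Qed.

Lemma RootP_cons_inv T k p : RootP T (k :: p) ->
  exists j t, nth_error (children T) k = Some (j, t) /\ RootP t p /\ agSeq T (k :: p) = j :: agSeq t p.
Proof.
  intros H; inversion H as [|ch k' i t' p' Hk Hp]; subst. exists i, t'. simpl. rewrite Hk.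
  split; [reflexivity|split; [assumption|reflexivity]].
Qed.

Lemma RootP_app T1 T2 k p : RootP (Node (children T1 ++ children T2)) (k :: p) ->
  (RootP T1 (k :: p) /\ agSeq (Node (children T1 ++ children T2)) (k :: p) = agSeq T1 (k :: p)) \/
  (exists k', RootP T2 (k' :: p) /\ agSeq (Node (children T1 ++ children T2)) (k :: p) = agSeq T2 (k' :: p)).
Proof.
  intros H; inversion H as [|ch k' i t' p' Hk Hp]; subst.
  destruct T1 as [c1]; destruct T2 as [c2]; simpl in *.
  destruct (Nat.lt_ge_cases k (length c1)) as [Hlt|Hge].
  - rewrite nth_error_app1 in Hk by exact Hlt. left. split.
    + econstructor; eauto.
    + rewrite nth_error_app1 by exact Hlt. rewrite Hk. reflexivity.
  - rewrite nth_error_app2 in Hk by exact Hge. right. exists (k - length c1)%nat. split.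
    + econstructor; eauto.
    + rewrite nth_error_app2 by exact Hge. rewrite Hk. reflexivity.
Qed.

Definition Cprop (T : tree) (W : Z -> Prop) (Q : nat -> Z -> Z -> Prop) : Prop :=
  forall sigma, RootP T sigma ->
    (exists u, W u /\ reach W Q 0 (agSeq T sigma) u) /\
    (forall u, reach W Q 0 (agSeq T sigma) u -> u <> -1) /\
    (forall u s, reach W Q 0 (agSeq T sigma) u -> reach W Q 0 s u -> nsr' s -> s = agSeq T sigma).

Definition Inv (phi : form) (D : Z -> Prop) (Q : nat -> Z -> Z -> Prop) : Prop :=
  (forall e, D e -> 1 <= e) /\
  (forall j a b, Q j a b -> b = -1 \/ D b) /\
  (forall j b, Q j (-1) b -> b = -1) /\
  (forall j, Q j (-1) (-1)) /\
  (forall j v, Q j 0 v -> D v -> ta phi j) /\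
  (forall k j t, nth_error (children (mtree phi)) k = Some (j, t) -> ta phi j) /\
  (DBInormal phi -> Cprop (mtree phi) (Eset D) Q).

Lemma Cnil W Q : W 0 -> (forall j a b, Q j a b -> b <> 0) ->
  forall T, (exists u, W u /\ reach W Q 0 (agSeq T []) u) /\
    (forall u, reach W Q 0 (agSeq T []) u -> u <> -1) /\
    (forall u s, reach W Q 0 (agSeq T []) u -> reach W Q 0 s u -> nsr' s -> s = agSeq T []).
Proof.
  intros HW HQ T; simpl; split; [|split].
  - exists 0; split; [auto|constructor].
  - intros u H; apply reach_nil_inv in H; subst; lia.
  - intros u s H1 H2 _; apply reach_nil_inv in H1; subst.
    destruct s as [|i s]; auto. exfalso.
    assert (Hne : i :: s <> []) by discriminate.
    exact (reach_nonzero _ _ _ _ _ HQ Hne H2 eq_refl).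
Qed.

Lemma Qunder_elim D Q j a b : Qunder D Q j a b -> Q j a b /\ (a = -1 \/ D a) /\ (b = -1 \/ D b).
Proof.
  unfold Qunder, Eset. intros [H [[Ha|[Ha|Ha]] [Ha0 [[Hb|[Hb|Hb]] Hb0]]]];
  repeat split; first [assumption | contradiction | (left; assumption) | (right; assumption)].
Qed.

Lemma Qunder_intro D Q j a b : (forall e, D e -> 1 <= e) -> Q j a b ->
  (a = -1 \/ D a) -> (b = -1 \/ D b) -> Qunder D Q j a b.
Proof.
  intros HD H Ha Hb. unfold Qunder, Eset.
  split; [exact H|]. split; [destruct Ha; [right; left| right; right]; assumption|].
  split; [destruct Ha as [Ha|Ha]; [lia| apply HD in Ha; lia]|].
  split; [destruct Hb; [right; left| right; right]; assumption|].
  destruct Hb as [Hb|Hb]; [lia| apply HD in Hb; lia].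
Qed.

Definition Q0 (i : nat) (m : Z) : nat -> Z -> Z -> Prop :=
  fun j a b => if Nat.eqb j i
    then (a = 0 /\ b = m) \/ (a = m /\ b = m) \/ (a = -1 /\ b = -1)
    else (a = 0 /\ b = -1) \/ (a = m /\ b = -1) \/ (a = -1 /\ b = -1).

Lemma case_Bxi i xi m : isprop xi = true -> 1 <= m ->
  Inv (B i xi) (fun e => e = m) (Q0 i m).
Proof.
  intros Hxi Hm.
  assert (Hmt : mtree (B i xi) = Node [(i, Node [])]) by (simpl; rewrite Hxi; reflexivity).
  assert (HA : forall j a b, Q0 i m j a b -> b = -1 \/ b = m).
  { intros j a b; unfold Q0; destruct (Nat.eqb j i); intros [[_ H]|[[_ H]|[_ H]]]; auto. }
  assert (HB1 : forall j b, Q0 i m j (-1) b -> b = -1).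
  { intros j b; unfold Q0; destruct (Nat.eqb j i); intros [[H1 H]|[[H1 H]|[H1 H]]]; lia. }
  assert (Hs0 : forall j v, Q0 i m j 0 v -> (j = i /\ v = m) \/ (j <> i /\ v = -1)).
  { intros j v; unfold Q0; destruct (Nat.eqb_spec j i); intros [[H1 H]|[[H1 H]|[H1 H]]];
    first [left; split; assumption | right; split; assumption | lia]. }
  assert (Hsm : forall j v, Q0 i m j m v -> (j = i /\ v = m) \/ (j <> i /\ v = -1)).
  { intros j v; unfold Q0; destruct (Nat.eqb_spec j i); intros [[H1 H]|[[H1 H]|[H1 H]]];
    first [left; split; assumption | right; split; assumption | lia]. }
  split; [intros e He; lia|]. split; [exact HA|]. split; [exact HB1|].
  split. { intros j; unfold Q0; destruct (Nat.eqb j i); right; right; split; reflexivity. }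
  split. { intros j v H Hv; simpl. destruct (Hs0 _ _ H) as [[? _]|[_ ?]]; [auto|lia]. }
  split. { intros k j t H; rewrite Hmt in H; simpl. destruct k as [|[|k]]; simpl in H; try discriminate. congruence. }
  intros _. rewrite Hmt. intros [|k p] Hsig.
  - apply Cnil; [unfold Eset; left; reflexivity|]. intros j a b H; destruct (HA _ _ _ H); lia.
  - destruct (RootP_cons_inv _ _ _ Hsig) as [j0 [t0 [Hk [Hp Hag]]]]. rewrite Hag.
    destruct k as [|[|k]]; simpl in Hk; try discriminate. injection Hk as Hj Ht. subst j0 t0.
    destruct p as [|k' p];
      [|destruct (RootP_cons_inv _ _ _ Hp) as [? [? [Hk' _]]]; destruct k'; simpl in Hk'; discriminate].
    simpl. split; [|split].
    + exists m; split; [unfold Eset; right; right; reflexivity|].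
      apply reach_cons with m; [unfold Q0; rewrite Nat.eqb_refl; left; split; reflexivity
                               |unfold Eset; right; right; reflexivity|constructor].
    + intros u H. apply reach_cons_inv in H as [v [H1 [_ H2]]]. apply reach_nil_inv in H2. subst u.
      destruct (Hs0 _ _ H1) as [[_ ->]|[Hc _]]; [lia|congruence].
    + intros u s H1 H2 Hs.
      apply reach_cons_inv in H1 as [v [H1 [_ H3]]]. apply reach_nil_inv in H3. subst u.
      destruct (Hs0 _ _ H1) as [[_ ->]|[Hc _]]; [|congruence].
      destruct s as [|j s]; [apply reach_nil_inv in H2; lia|].
      apply reach_cons_inv in H2 as [w [H4 [_ H5]]].
      destruct (Hs0 _ _ H4) as [[-> ->]|[_ ->]]; [|apply (reach_sink _ _ _ _ HB1) in H5; lia].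
      destruct s as [|k s]; [reflexivity|].
      simpl in Hs; destruct Hs as [Hik _].
      apply reach_cons_inv in H5 as [x [H6 [_ H7]]].
      destruct (Hsm _ _ H6) as [[Hc _]|[_ ->]]; [congruence|].
      apply (reach_sink _ _ _ _ HB1) in H7; lia.
Qed.

Definition QB (i : nat) (D : Z -> Prop) (Q : nat -> Z -> Z -> Prop) (m : Z) : nat -> Z -> Z -> Prop :=
  fun j a b => if Nat.eqb j i
    then Qunder D Q j a b \/ (a = 0 /\ b = m) \/ (a = m /\ b = m)
    else Qunder D Q j a b \/ (a = 0 /\ b = -1) \/ (a = m /\ Q j 0 b).

Lemma case_B i psi phi D Q m :
  Inv psi D Q -> 1 <= m -> ~ D m ->
  mtree phi = Node [(i, mtree psi)] ->
  (forall j, ta phi j <-> j = i) ->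
  (DBInormal phi -> DBInormal psi /\ ~ ta psi i) ->
  Inv phi (fun e => D e \/ e = m) (QB i D Q m).
Proof.
  intros [HD [HA [HB1 [HB2 [HE [HL HC]]]]]] Hm HmD Hmt Hta Hn.
  assert (HD' : forall e, D e \/ e = m -> 1 <= e) by (intros e [He|He]; [apply HD; auto| lia]).
  assert (HA' : forall j a b, QB i D Q m j a b -> b = -1 \/ (D b \/ b = m)).
  { intros j a b; unfold QB; destruct (Nat.eqb j i); intros H.
    - destruct H as [H|[[_ H]|[_ H]]].
      + apply Qunder_elim in H; destruct H as [_ [_ [H|H]]]; auto.
      + auto.
      + auto.
    - destruct H as [H|[[_ H]|[_ H]]].
      + apply Qunder_elim in H; destruct H as [_ [_ [H|H]]]; auto.
      + auto.
      + destruct (HA _ _ _ H); auto. }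
  assert (HS0 : ~ (0 = -1 \/ D 0)) by (intros [H|H]; [lia| apply HD in H; lia]).
  assert (HSm : ~ (m = -1 \/ D m)) by (intros [H|H]; [lia| contradiction]).
  assert (Hs0 : forall j v, QB i D Q m j 0 v -> (j = i /\ v = m) \/ (j <> i /\ v = -1)).
  { intros j v; unfold QB; destruct (Nat.eqb_spec j i) as [Hji|Hji]; intros H;
      (destruct H as [H|[[_ H]|[H _]]];
      [apply Qunder_elim in H; destruct H as [_ [H _]]; contradiction
      | auto | lia]). }
  assert (Hsm : forall j v, QB i D Q m j m v -> (j = i /\ v = m) \/ (j <> i /\ Q j 0 v)).
  { intros j v; unfold QB; destruct (Nat.eqb_spec j i) as [Hji|Hji]; intros H;
      (destruct H as [H|[[H _]|[_ H]]];
      [apply Qunder_elim in H; destruct H as [_ [H _]]; contradiction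
      | lia | auto]). }
  assert (Hsmr : forall j v, j <> i -> Q j 0 v -> QB i D Q m j m v).
  { intros j v Hji H; unfold QB; destruct (Nat.eqb_spec j i); [contradiction|]. right; right; auto. }
  assert (HSW : forall x, (x = -1 \/ D x) -> Eset (fun e => D e \/ e = m) x).
  { intros x [H|H]; unfold Eset; [right; left; exact H| right; right; left; exact H]. }
  assert (HSW0 : forall x, (x = -1 \/ D x) -> Eset D x).
  { intros x [H|H]; unfold Eset; [right; left; exact H| right; right; exact H]. }
  assert (Hfwd : forall s v u, (v = -1 \/ D v) ->
            reach (Eset (fun e => D e \/ e = m)) (QB i D Q m) v s u -> reach (Eset D) Q v s u /\ (u = -1 \/ D u)).
  { apply reach_sim; [exact HSW0|].
    intros j a b Ha H _. unfold QB in H.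
    destruct (Nat.eqb j i); destruct H as [H|[[H _]|[H H']]];
      try (apply Qunder_elim in H; destruct H as [H [_ Hb]]; split; assumption);
      try (rewrite H in Ha; contradiction). }
  assert (Hbwd : forall s v u, (v = -1 \/ D v) ->
            reach (Eset D) Q v s u -> reach (Eset (fun e => D e \/ e = m)) (QB i D Q m) v s u /\ (u = -1 \/ D u)).
  { apply reach_sim; [exact HSW|].
    intros j a b Ha H _.
    pose proof (HA _ _ _ H) as Hb.
    split; [|exact Hb]. unfold QB. assert (Qunder D Q j a b) by (apply Qunder_intro; auto).
    destruct (Nat.eqb j i); left; auto. }
  assert (HB1' : forall j b, QB i D Q m j (-1) b -> b = -1).
  { intros j b; unfold QB; destruct (Nat.eqb j i); intros [H|[[H _]|[H _]]]; try lia;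
    apply Qunder_elim in H; destruct H as [H _]; exact (HB1 _ _ H). }
  split; [exact HD'|]. split; [exact HA'|]. split; [exact HB1'|].
  split. { intros j; unfold QB. assert (Qunder D Q j (-1) (-1)) by (apply Qunder_intro; auto; left; reflexivity).
           destruct (Nat.eqb j i); left; auto. }
  split. { intros j v H Hv. apply Hta. destruct (Hs0 _ _ H) as [[? _]|[_ Hv']]; auto.
           apply HD' in Hv; lia. }
  split. { intros k j t H. rewrite Hmt in H. apply Hta. destruct k as [|[|k]]; simpl in H; try discriminate. congruence. }
  intros Hnorm. destruct (Hn Hnorm) as [Hnp Hnt]. specialize (HC Hnp).
  rewrite Hmt.
  assert (Hfirst : forall j s u, reach (Eset (fun e => D e \/ e = m)) (QB i D Q m) 0 (j :: s) u ->
            (j = i /\ reach (Eset (fun e => D e \/ e = m)) (QB i D Q m) m s u) \/ (j <> i /\ u = -1)).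
  { intros j s u H. apply reach_cons_inv in H as [v [H1 [_ H3]]].
    destruct (Hs0 _ _ H1) as [[Hj Hv]|[Hj Hv]].
    - left; split; [exact Hj| rewrite Hv in H3; exact H3].
    - right; split; [exact Hj|]. rewrite Hv in H3. exact (reach_sink _ _ _ _ HB1' H3). }
  assert (Hdec : forall k s u, k <> i -> reach (Eset (fun e => D e \/ e = m)) (QB i D Q m) m (k :: s) u ->
            reach (Eset D) Q 0 (k :: s) u /\ (u = -1 \/ D u)).
  { intros k s u Hk H. apply reach_cons_inv in H as [v [H1 [_ H3]]].
    destruct (Hsm _ _ H1) as [[? _]|[_ H1']]; [contradiction|].
    pose proof (HA _ _ _ H1') as Hv.
    destruct (Hfwd _ _ _ Hv H3) as [H4 H5]. split; auto.
    apply reach_cons with v; auto. }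
  assert (Hcomp : forall k s u, k <> i -> reach (Eset D) Q 0 (k :: s) u ->
            reach (Eset (fun e => D e \/ e = m)) (QB i D Q m) 0 (i :: k :: s) u /\ (u = -1 \/ D u)).
  { intros k s u Hk H. apply reach_cons_inv in H as [v [H1 [_ H3]]].
    pose proof (HA _ _ _ H1) as Hv.
    destruct (Hbwd _ _ _ Hv H3) as [H4 H5]. split; auto.
    apply reach_cons with m.
    { unfold QB. rewrite Nat.eqb_refl. right; left; split; reflexivity. }
    { unfold Eset; right; right; right; reflexivity. }
    apply reach_cons with v; [apply Hsmr; auto | apply HSW; auto | exact H4]. }
  intros [|k p] Hsig.
  { apply Cnil; [unfold Eset; left; reflexivity|].
    intros j a b H. destruct (HA' _ _ _ H) as [->|Hb]; [lia| apply HD' in Hb; lia]. }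
  destruct (RootP_cons_inv _ _ _ Hsig) as [j0 [t0 [Hk [Hp Hag]]]]. rewrite Hag.
  destruct k as [|[|k]]; simpl in Hk; try discriminate. injection Hk as Hj Ht. subst j0 t0.
  destruct p as [|k p].
  - simpl. split; [|split].
    + exists m. split; [unfold Eset; right; right; right; reflexivity|].
      apply reach_cons with m; [unfold QB; rewrite Nat.eqb_refl; right; left; split; reflexivity
                               | unfold Eset; right; right; right; reflexivity | constructor].
    + intros u H. destruct (Hfirst _ _ _ H) as [[_ H']|[Hc _]]; [|congruence].
      apply reach_nil_inv in H'. lia.
    + intros u s H1 H2 Hs.
      destruct (Hfirst _ _ _ H1) as [[_ H1']|[Hc _]]; [|congruence].
      apply reach_nil_inv in H1'. subst u.
      destruct s as [|j s]; [apply reach_nil_inv in H2; lia|].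
      destruct (Hfirst _ _ _ H2) as [[-> H3]|[_ H3]]; [|lia].
      destruct s as [|k s]; [reflexivity|].
      simpl in Hs; destruct Hs as [Hik _].
      destruct (Hdec k s m (not_eq_sym Hik) H3) as [_ [Hu|Hu]]; [lia|contradiction].
  - destruct (RootP_cons_inv _ _ _ Hp) as [j1 [t1 [Hk1 [Hp1 Hag1]]]].
    assert (Hj1 : j1 <> i) by (intros ->; exact (Hnt (HL _ _ _ Hk1))).
    destruct (HC _ Hp) as [Hex [Hnn Huq]]. rewrite Hag1 in Hex, Hnn, Huq.
    rewrite Hag1.
    split; [|split].
    + destruct Hex as [u [Hu Hr]]. destruct (Hcomp _ _ _ Hj1 Hr) as [H1 H2].
      exists u; split; [apply HSW; exact H2| exact H1].
    + intros u H. destruct (Hfirst _ _ _ H) as [[_ H']|[Hc _]]; [|congruence].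
      destruct (Hdec _ _ _ Hj1 H') as [H3 _]. exact (Hnn _ H3).
    + intros u s H1 H2 Hs.
      destruct (Hfirst _ _ _ H1) as [[_ H1']|[Hc _]]; [|congruence].
      destruct (Hdec _ _ _ Hj1 H1') as [H3 [Hu|Hu]]; [exfalso; exact (Hnn _ H3 Hu)|].
      destruct s as [|j s]. { apply reach_nil_inv in H2. rewrite H2 in Hu. apply HD in Hu; lia. }
      destruct (Hfirst _ _ _ H2) as [[-> H4]|[_ H4]]; [|apply HD in Hu; lia].
      destruct s as [|k' s]. { apply reach_nil_inv in H4. rewrite H4 in Hu; contradiction. }
      simpl in Hs; destruct Hs as [Hik Hs].
      destruct (Hdec _ _ _ (not_eq_sym Hik) H4) as [H5 _].
      rewrite (Huq _ _ H3 H5 Hs). reflexivity.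
Qed.

Definition QA (D1 : Z -> Prop) Q1 (D2 : Z -> Prop) Q2 : nat -> Z -> Z -> Prop := fun j a b =>
  Qunder D1 Q1 j a b \/ Qunder D2 Q2 j a b
  \/ (a = 0 /\ (Q1 j 0 b \/ Q2 j 0 b) /\ (D1 b \/ D2 b))
  \/ (a = 0 /\ b = -1 /\ ~ (exists k, (Q1 j 0 k \/ Q2 j 0 k) /\ (D1 k \/ D2 k))).

Lemma QA_step0 D1 Q1 D2 Q2 j v :
  (forall e, D1 e -> 1 <= e) -> (forall e, D2 e -> 1 <= e) ->
  (forall j a b, Q1 j a b -> b = -1 \/ D1 b) -> (forall j a b, Q2 j a b -> b = -1 \/ D2 b) ->
  QA D1 Q1 D2 Q2 j 0 v ->
  (D1 v /\ Q1 j 0 v) \/ (D2 v /\ Q2 j 0 v) \/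
  (v = -1 /\ ~ (exists k, (Q1 j 0 k \/ Q2 j 0 k) /\ (D1 k \/ D2 k))).
Proof.
  intros HD1 HD2 HA1 HA2 [H|[H|[H|H]]].
  - apply Qunder_elim in H. destruct H as [_ [[H|H] _]]; [lia| apply HD1 in H; lia].
  - apply Qunder_elim in H. destruct H as [_ [[H|H] _]]; [lia| apply HD2 in H; lia].
  - destruct H as [_ [[H|H] Hv]].
    + destruct (HA1 _ _ _ H) as [Hv1|Hv1];
        [rewrite Hv1 in Hv; destruct Hv as [Hv|Hv]; [apply HD1 in Hv|apply HD2 in Hv]; lia | left; auto].
    + destruct (HA2 _ _ _ H) as [Hv1|Hv1];
        [rewrite Hv1 in Hv; destruct Hv as [Hv|Hv]; [apply HD1 in Hv|apply HD2 in Hv]; lia | right; left; auto].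
  - destruct H as [_ [H1 H2]]. right; right; auto.
Qed.

Lemma QA_sink D1 Q1 D2 Q2 j b :
  (forall j b, Q1 j (-1) b -> b = -1) -> (forall j b, Q2 j (-1) b -> b = -1) ->
  QA D1 Q1 D2 Q2 j (-1) b -> b = -1.
Proof.
  intros H1 H2 [H|[H|[H|H]]].
  - apply Qunder_elim in H as [H _]; eauto.
  - apply Qunder_elim in H as [H _]; eauto.
  - destruct H as [H _]; lia.
  - destruct H as [H _]; lia.
Qed.

Lemma QA_swap D1 Q1 D2 Q2 j a b : QA D1 Q1 D2 Q2 j a b -> QA D2 Q2 D1 Q1 j a b.
Proof.
  unfold QA. intros [H|[H|[H|H]]].
  - right; left; exact H.
  - left; exact H.
  - right; right; left. destruct H as [H1 [H2 H3]]. split; [exact H1| split; tauto].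
  - right; right; right. destruct H as [H1 [H2 H3]]. split; [exact H1| split; [exact H2|]].
    intros [k [Hk1 Hk2]]. apply H3. exists k. split; tauto.
Qed.

Lemma reach_swap D1 Q1 D2 Q2 s v u :
  reach (Eset (fun e => D2 e \/ D1 e)) (QA D2 Q2 D1 Q1) v s u ->
  reach (Eset (fun e => D1 e \/ D2 e)) (QA D1 Q1 D2 Q2) v s u.
Proof.
  revert v; induction s as [|i s IH]; intros v H.
  - apply reach_nil_inv in H; subst; constructor.
  - apply reach_cons_inv in H as [x [H1 [H2 H3]]].
    apply reach_cons with x; [apply QA_swap; exact H1| unfold Eset in *; tauto | apply IH; exact H3].
Qed.

Lemma and_side psi theta D1 Q1 D2 Q2 :
  Inv psi D1 Q1 -> Inv theta D2 Q2 -> (forall e, D1 e -> D2 e -> False) ->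
  (forall j, ta psi j -> ta theta j -> False) -> DBInormal psi ->
  forall k p, RootP (mtree psi) (k :: p) ->
    (exists u, Eset (fun e => D1 e \/ D2 e) u /\
       reach (Eset (fun e => D1 e \/ D2 e)) (QA D1 Q1 D2 Q2) 0 (agSeq (mtree psi) (k :: p)) u) /\
    (forall u, reach (Eset (fun e => D1 e \/ D2 e)) (QA D1 Q1 D2 Q2) 0 (agSeq (mtree psi) (k :: p)) u -> u <> -1) /\
    (forall u s, reach (Eset (fun e => D1 e \/ D2 e)) (QA D1 Q1 D2 Q2) 0 (agSeq (mtree psi) (k :: p)) u ->
       reach (Eset (fun e => D1 e \/ D2 e)) (QA D1 Q1 D2 Q2) 0 s u -> nsr' s -> s = agSeq (mtree psi) (k :: p)).
Proof.
  intros [HD1 [HA1 [HB11 [HB21 [HE1 [HL1 HC1]]]]]] [HD2 [HA2 [HB12 [HB22 [HE2 [HL2 HC2]]]]]] Hdis Htd Hn k p Hp.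
  specialize (HC1 Hn).
  destruct (RootP_cons_inv _ _ _ Hp) as [j0 [t0 [Hk [Hp0 Hag]]]].
  pose proof (HL1 _ _ _ Hk) as Hj0.
  destruct (HC1 _ Hp) as [Hex [Hnn Huq]].
  rewrite Hag in *.
  set (W := Eset (fun e => D1 e \/ D2 e)).
  set (Q := QA D1 Q1 D2 Q2).
  assert (HQsink : forall j b, Q j (-1) b -> b = -1) by (intros j b; apply QA_sink; auto).
  assert (HS1 : forall s v u, (v = -1 \/ D1 v) -> reach W Q v s u -> reach (Eset D1) Q1 v s u /\ (u = -1 \/ D1 u)).
  { apply reach_sim.
    - intros x [Hx|Hx]; unfold Eset; [right; left; exact Hx| right; right; exact Hx].
    - intros j a b Ha H _. destruct H as [H|[H|[H|H]]].
      + apply Qunder_elim in H as [H [_ Hb]]. split; [exact H| exact Hb].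
      + apply Qunder_elim in H as [H [[Ha'|Ha'] _]].
        * rewrite Ha' in H. pose proof (HB12 _ _ H) as Hb. rewrite Hb, Ha'.
          split; [apply HB21| left; reflexivity].
        * destruct Ha as [Ha|Ha]; [apply HD2 in Ha'; lia| exfalso; exact (Hdis _ Ha Ha')].
      + destruct H as [H _]. rewrite H in Ha. destruct Ha as [Ha|Ha]; [lia| apply HD1 in Ha; lia].
      + destruct H as [H _]. rewrite H in Ha. destruct Ha as [Ha|Ha]; [lia| apply HD1 in Ha; lia]. }
  assert (HS1b : forall s v u, (v = -1 \/ D1 v) -> reach (Eset D1) Q1 v s u -> reach W Q v s u /\ (u = -1 \/ D1 u)).
  { apply reach_sim.
    - intros x [Hx|Hx]; unfold W, Eset; [right; left; exact Hx| right; right; left; exact Hx].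
    - intros j a b Ha H _. pose proof (HA1 _ _ _ H) as Hb. split; [|exact Hb].
      left. apply Qunder_intro; auto. }
  assert (HS2 : forall s v u, (v = -1 \/ D2 v) -> reach W Q v s u -> u = -1 \/ D2 u).
  { apply reach_closed. intros j a b Ha H. destruct H as [H|[H|[H|H]]].
    - apply Qunder_elim in H as [H [[Ha'|Ha'] _]].
      + rewrite Ha' in H. left. exact (HB11 _ _ H).
      + destruct Ha as [Ha|Ha]; [apply HD1 in Ha'; lia| exfalso; exact (Hdis _ Ha' Ha)].
    - apply Qunder_elim in H as [_ [_ Hb]]. exact Hb.
    - destruct H as [H _]. rewrite H in Ha. destruct Ha as [Ha|Ha]; [lia| apply HD2 in Ha; lia].
    - destruct H as [H _]. rewrite H in Ha. destruct Ha as [Ha|Ha]; [lia| apply HD2 in Ha; lia]. }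
  assert (Hsplit : forall j s u, reach W Q 0 (j :: s) u ->
            (reach (Eset D1) Q1 0 (j :: s) u /\ (u = -1 \/ D1 u)) \/ (ta theta j /\ (u = -1 \/ D2 u))
            \/ (u = -1 /\ ~ (exists k, (Q1 j 0 k \/ Q2 j 0 k) /\ (D1 k \/ D2 k)))).
  { intros j s u H. apply reach_cons_inv in H as [v [H1 [_ H2]]].
    destruct (QA_step0 _ _ _ _ _ _ HD1 HD2 HA1 HA2 H1) as [[Hv Hq]|[[Hv Hq]|[Hv Hno]]].
    - destruct (HS1 _ _ _ (or_intror Hv) H2) as [H3 H4]. left; split; auto.
      apply reach_cons with v; auto. unfold Eset; right; right; exact Hv.
    - right; left. split; [exact (HE2 _ _ Hq Hv)|]. exact (HS2 _ _ _ (or_intror Hv) H2).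
    - right; right. split; [|exact Hno]. rewrite Hv in H2. exact (reach_sink _ _ _ _ HQsink H2). }
  assert (Hnn' : forall u, reach W Q 0 (j0 :: agSeq t0 p) u -> u <> -1).
  { intros u H Hu. destruct (Hsplit _ _ _ H) as [[H3 _]|[[Ht _]|[_ Hno]]].
    - exact (Hnn _ H3 Hu).
    - exact (Htd _ Hj0 Ht).
    - destruct Hex as [u1 [_ Hr1]]. pose proof (Hnn _ Hr1) as Hu1.
      apply reach_cons_inv in Hr1 as [v1 [H4 [_ H5]]].
      destruct (HA1 _ _ _ H4) as [Hv1|Hv1].
      + rewrite Hv1 in H5. apply (reach_sink _ _ _ _ HB11) in H5. contradiction.
      + apply Hno. exists v1. split; left; assumption. }
  split; [|split].
  - destruct Hex as [u1 [Hw1 Hr1]]. pose proof (Hnn _ Hr1) as Hu1.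
    apply reach_cons_inv in Hr1 as [v1 [H4 [_ H5]]].
    destruct (HA1 _ _ _ H4) as [Hv1|Hv1].
    + rewrite Hv1 in H5. apply (reach_sink _ _ _ _ HB11) in H5. contradiction.
    + destruct (HS1b _ _ _ (or_intror Hv1) H5) as [H6 [H7|H7]]; [contradiction|].
      exists u1. split; [unfold W, Eset; right; right; left; exact H7|].
      apply reach_cons with v1.
      * unfold Q, QA. right; right; left. split; [reflexivity| split; left; assumption].
      * unfold W, Eset; right; right; left; exact Hv1.
      * exact H6.
  - exact Hnn'.
  - intros u s H1 H2 Hs.
    pose proof (Hnn' _ H1) as Hu.
    destruct (Hsplit _ _ _ H1) as [[H3 [Hu1|Hu1]]|[[Ht _]|[Hu1 _]]];
      [contradiction| | exfalso; exact (Htd _ Hj0 Ht) | contradiction].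
    destruct s as [|j s]. { apply reach_nil_inv in H2. rewrite H2 in Hu1. apply HD1 in Hu1. lia. }
    destruct (Hsplit _ _ _ H2) as [[H4 _]|[[_ [Hu2|Hu2]]|[Hu2 _]]].
    + exact (Huq _ _ H3 H4 Hs).
    + contradiction.
    + exfalso; exact (Hdis _ Hu1 Hu2).
    + contradiction.
Qed.

Lemma DBInormal_and_inv a b : DBInormal (And a b) ->
  DBInormal a /\ DBInormal b /\ (forall j, ta a j -> ta b j -> False).
Proof. intros H; inversion H; auto. Qed.

Lemma case_and psi theta D1 Q1 D2 Q2 :
  Inv psi D1 Q1 -> Inv theta D2 Q2 -> (forall e, D1 e -> D2 e -> False) ->
  Inv (And psi theta) (fun e => D1 e \/ D2 e) (QA D1 Q1 D2 Q2).
Proof.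
  intros I1 I2 Hdis.
  pose proof I1 as [HD1 [HA1 [HB11 [HB21 [HE1 [HL1 HC1]]]]]].
  pose proof I2 as [HD2 [HA2 [HB12 [HB22 [HE2 [HL2 HC2]]]]]].
  assert (HD : forall e, D1 e \/ D2 e -> 1 <= e) by (intros e [He|He]; auto).
  assert (HA : forall j a b, QA D1 Q1 D2 Q2 j a b -> b = -1 \/ (D1 b \/ D2 b)).
  { intros j a b [H|[H|[H|H]]].
    - apply Qunder_elim in H as [_ [_ [Hb|Hb]]]; auto.
    - apply Qunder_elim in H as [_ [_ [Hb|Hb]]]; auto.
    - destruct H as [_ [_ Hb]]; auto.
    - destruct H as [_ [Hb _]]; auto. }
  split; [exact HD|]. split; [exact HA|].
  split; [intros j b; apply QA_sink; auto|].
  split. { intros j. left. apply Qunder_intro; auto; left; reflexivity. }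
  split. { intros j v H Hv. simpl.
           destruct (QA_step0 _ _ _ _ _ _ HD1 HD2 HA1 HA2 H) as [[Hv1 Hq]|[[Hv1 Hq]|[Hv1 _]]].
           - left; eapply HE1; eauto.
           - right; eapply HE2; eauto.
           - apply HD in Hv; lia. }
  split. { intros k j t H. simpl in H. simpl.
           destruct (Nat.lt_ge_cases k (length (children (mtree psi)))) as [Hlt|Hge].
           - rewrite nth_error_app1 in H by exact Hlt. left; eapply HL1; eauto.
           - rewrite nth_error_app2 in H by exact Hge. right; eapply HL2; eauto. }
  intros Hn. destruct (DBInormal_and_inv _ _ Hn) as [Hna [Hnb Htd]].
  intros [|k p] Hsig.
  - apply Cnil; [unfold Eset; left; reflexivity|].
    intros j a b H. destruct (HA _ _ _ H) as [->|Hb]; [lia| apply HD in Hb; lia].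
  - change (mtree (And psi theta)) with (Node (children (mtree psi) ++ children (mtree theta))) in *.
    destruct (RootP_app _ _ _ _ Hsig) as [[Hp1 Hag]|[k' [Hp2 Hag]]]; rewrite Hag.
    + exact (and_side psi theta D1 Q1 D2 Q2 I1 I2 Hdis Htd Hna k p Hp1).
    + destruct (and_side theta psi D2 Q2 D1 Q1 I2 I1 (fun e h1 h2 => Hdis e h2 h1)
                  (fun j h1 h2 => Htd j h2 h1) Hnb k' p Hp2) as [Hex [Hnn Huq]].
      split; [|split].
      * destruct Hex as [u [Hu Hr]]. exists u. split; [unfold Eset in *; tauto| apply reach_swap; exact Hr].
      * intros u H. apply Hnn. apply reach_swap; exact H.
      * intros u s H1 H2 Hs. apply (Huq u s); [apply reach_swap; exact H1| apply reach_swap; exact H2| exact Hs].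
Qed.

Lemma UM_notprop phi D Q pre : UM phi D Q pre -> isprop phi = false.
Proof. intros H; induction H; simpl; auto. rewrite IHUM1; auto. Qed.

Lemma UM_and_notprop a b D Q pre : UM (And a b) D Q pre -> isprop a = false.
Proof. intros H; inversion H; subst; eapply UM_notprop; eauto. Qed.

Lemma DBInormal_notprop f : DBInormal f -> isprop f = false.
Proof. intros H; induction H; simpl; auto. rewrite IHDBInormal1; auto. Qed.

Lemma mtree_B i psi D Q pre : UM psi D Q pre -> mtree (B i psi) = Node [(i, mtree psi)].
Proof.
  intros H. destruct H; try reflexivity. simpl.
  repeat match goal with Hu : UM ?a _ _ _ |- context[isprop ?a] => rewrite (UM_notprop _ _ _ _ Hu) end.
  reflexivity.
Qed.

Lemma inv_UM phi D Q pre : UM phi D Q pre -> Inv phi D Q.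
Proof.
  intros H; induction H as [i xi m Hxi Hm
    | i psi D Q pre m Hpsi IH Hnp Hm HmD
    | i xi psi D Q pre m Hxi Hpsi IH Hnp Hm HmD
    | psi theta D1 Q1 pre1 D2 Q2 pre2 pre Hpsi IH1 Htheta IH2 Hdis _ _ _ _].
  - exact (case_Bxi i xi m Hxi Hm).
  - apply (case_B i psi (B i psi) D Q m IH Hm HmD).
    + exact (mtree_B i _ _ _ _ Hpsi).
    + intros j; simpl; tauto.
    + intros Hn. inversion Hn; subst.
      * congruence.
      * split; assumption.
      * apply UM_and_notprop in Hpsi. congruence.
  - apply (case_B i psi (B i (And xi psi)) D Q m IH Hm HmD).
    + simpl. rewrite Hxi, Hnp. reflexivity.
    + intros j; simpl; tauto.
    + intros Hn. inversion Hn; subst.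
      * match goal with Hh : isprop (And xi psi) = true |- _ => simpl in Hh; rewrite Hnp in Hh end.
        destruct (isprop xi); discriminate.
      * match goal with Hh : DBInormal (And xi psi) |- _ =>
          destruct (DBInormal_and_inv _ _ Hh) as [Hx _] end.
        apply DBInormal_notprop in Hx. congruence.
      * split; assumption.
  - exact (case_and psi theta D1 Q1 D2 Q2 IH1 IH2 Hdis).
Qed.

Theorem theorem8 :
  forall (n : nat), (1 < n)%nat ->
  forall (phi : form), DBI phi -> DBInormal phi -> agents_in n phi ->
  forall (D : Z -> Prop) (Q : nat -> Z -> Z -> Prop) (pre : Z -> form),
    UM phi D Q pre ->
    privatized n (Eset D) Q 0%Z phi.
Proof.
  intros n Hn phi Hdbi Hnorm Hag D Q pre HU.
  destruct (inv_UM _ _ _ _ HU) as [_ [_ [_ [_ [_ [_ HC]]]]]].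
  specialize (HC Hnorm).
  intros sigma Hs. destruct (HC sigma Hs) as [Hex [_ Huq]].
  split.
  - destruct Hex as [u [Hu Hr]]. exists u. split; assumption.
  - intros s Hs' Hne u [Hu1 Hr1] [Hu2 Hr2]. apply Hne.
    exact (Huq u s Hr1 Hr2 (nsr_nsr' n s Hs')).
Qed.
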